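(* For every positive integer $n$ and every complex number $q$ with $0<|q|<1$, \[ \sum_{k=1}^{n}q^{2k}[8k+1]\frac{(q;q^2)_{k}^2(q;q^2)_{2k}}{(q^2;q^2)_{2k}(q^6;q^6)_{k}^2}\frac{(q^{3+6n},q^{-6n};q^6)_k}{(q^{3+6n},q^{-6n};q^2)_k}\sum_{i=1}^{k}\left\{\frac{q^{2i-1}}{[2i-1]^2}-\frac{q^{6i}}{[6i]^2}\right\} =\frac{(q^3;q^2)_{3n}(q^3;q^6)_{n}}{(q^2;q^2)_{3n}(q^6;q^6)_{n}}\sum_{j=1}^{2n}(-1)^{j-1}\frac{q^{3j}}{[3j]^2}. \]
   Context: For complex $x,q$ and an integer $n\ge 0$, $(x;q)_n=\prod_{i=0}^{n-1}(1-xq^i)$, and $(x_1,\dots,x_r;q)_n=(x_1;q)_n\cdots(x_r;q)_n$. The $q$-integer is $[n]=1+q+\cdots+q^{n-1}=(1-q^n)/(1-q)$. *)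

(* Defs.v *)
From HB Require Import structures.
From mathcomp Require Import all_boot all_order all_algebra.
From mathcomp Require Import reals.
From mathcomp.real_closed Require Import complex.
Set Implicit Arguments. Unset Strict Implicit. Unset Printing Implicit Defensive.
Import Order.TTheory GRing.Theory Num.Theory.
Local Open Scope ring_scope.

Definition qpoch (F : comRingType) (x q : F) (n : nat) : F :=
  \prod_(i < n) (1 - x * q ^+ i).

Definition qint (F : comRingType) (q : F) (n : nat) : F :=
  \sum_(i < n) q ^+ i.

(* Main.v *)
Require Import Defs.
From HB Require Import structures.
From mathcomp Require Import all_boot all_order all_algebra.
From mathcomp Require Import reals.
From mathcomp.real_closed Require Import complex.
From mathcomp Require Import ring lra zify.
Import Order.TTheory GRing.Theory Num.Theory.
Set Implicit Arguments. Unset Strict Implicit. Unset Printing Implicit Defensive.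
Local Open Scope ring_scope.

Lemma qpochS (F : comRingType) (x y : F) k : qpoch x y k.+1 = qpoch x y k * (1 - x * y ^+ k).
Proof. by rewrite /qpoch big_ord_recr. Qed.
Lemma qpoch0 (F : comRingType) (x y : F) : qpoch x y 0 = 1.
Proof. by rewrite /qpoch big_ord0. Qed.
Lemma qpoch_shift (F : fieldType) (x y : F) k : 1 - x != 0 ->
  qpoch (x * y) y k = qpoch x y k * (1 - x * y ^+ k) / (1 - x).
Proof.
move=> hx; elim: k => [|k IH]; first by rewrite !qpoch0 expr0 mulr1 mul1r divff.
rewrite !qpochS IH exprS; field; done.
Qed.
Lemma qpoch_nz (F : fieldType) (x y : F) k :
  (forall i, (i < k)%N -> 1 - x * y ^+ i != 0) -> qpoch x y k != 0.
Proof. by move=> h; rewrite /qpoch; apply/prodf_neq0 => i _; apply: h. Qed.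
Lemma qintE (F : fieldType) (q : F) m : 1 - q != 0 -> qint q m = (1 - q ^+ m) / (1 - q).
Proof.
move=> hq; apply: (canRL (mulfK hq)); rewrite /qint.
elim: m => [|m IH]; first by rewrite big_ord0 expr0 subrr mul0r.
by rewrite big_ord_recr /= mulrDl IH exprSr; ring.
Qed.

Definition c1f (F : fieldType) (q N : F) : F :=
  q ^+ 6 * (N ^+ 3) ^+ 2 * (1 - q ^+ 6 * N ^+ 3) ^+ 2 / (1 - q ^+ 3 * N ^+ 3) ^+ 2.
Definition rho1 (F : fieldType) (q N K : F) : F :=
  let p := q ^+ 2 in let x := q ^+ 3 * N ^+ 3 in let y := (N ^+ 3)^-1 in
  c1f q N * (1 - x * K ^+ 3) * (1 - y * K / p ^+ 3) * (1 - y * K / p ^+ 2) * (1 - y * K / p)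
  / ((1 - y * K ^+ 3 / p ^+ 3) * (1 - x * K) * (1 - p * x * K) * (1 - p ^+ 2 * x * K)).
Definition rho2 (F : fieldType) (q N K : F) : F :=
  let p := q ^+ 2 in let x := q ^+ 3 * N ^+ 3 in let y := (N ^+ 3)^-1 in
  p * (1 - q * p ^+ 4 * K ^+ 4) * (1 - q * K) ^+ 2 * (1 - q * K ^+ 2) * (1 - q * p * K ^+ 2)
  * (1 - x * K ^+ 3) * (1 - y * K ^+ 3)
  / ((1 - q * K ^+ 4) * (1 - p * K ^+ 2) * (1 - p ^+ 2 * K ^+ 2) * (1 - p ^+ 3 * K ^+ 3) ^+ 2
     * (1 - x * K) * (1 - y * K)).
Definition phif (F : fieldType) (q N : F) : F :=
  - q ^+ 2 * N ^+ 3 * (1 - q ^+ 9 * (N ^+ 3) ^+ 2) / (1 - q ^+ 3 * N ^+ 3) ^+ 2.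
Definition phid (F : fieldType) (q N : F) : F :=
  - q ^+ 2 * q ^+ 3 * (N ^+ 3) ^+ 2 * (1 - q ^+ 9 * (N ^+ 3) ^+ 2) / (1 - q ^+ 3 * N ^+ 3) ^+ 4.
Definition Rw (F : fieldType) (q N K : F) : F :=
  let p := q ^+ 2 in let x := q ^+ 3 * N ^+ 3 in let y := (N ^+ 3)^-1 in
  (1 - K ^+ 2 / p) * (1 - K ^+ 2) * (1 - y * K / p) * (1 - x * p ^+ 2 * K)
  / (K * (1 - y * K ^+ 3 / p ^+ 3) * (1 - x * K) * (1 - p * x * K) * (1 - p ^+ 2 * x * K)
     * (1 - q * K ^+ 4)).
Definition R0 (F : fieldType) (q N K : F) : F := phif q N * Rw q N K * (1 - K ^+ 3) ^+ 2.
Definition R1 (F : fieldType) (q N K : F) : F :=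
  phid q N * Rw q N K * (1 - K ^+ 3) ^+ 2 - phif q N * K ^+ 3 * Rw q N K.
Definition Wr (F : fieldType) (q N K : F) : F :=
  let p := q ^+ 2 in let x := q ^+ 3 * N ^+ 3 in
  (1 - q * K) ^+ 2 * (1 - q * K ^+ 2) * (1 - p * q * K ^+ 2) * (1 - x * K ^+ 3)
  / (K * (1 - x * p * K) * (1 - x * p ^+ 2 * K) * (1 - q * K ^+ 4) * (1 - x * K)).
Definition W0 (F : fieldType) (q N K : F) : F := phif q N * Wr q N K.
Definition W1 (F : fieldType) (q N K : F) : F :=
  phid q N * Wr q N K
  - phif q N * (q ^+ 2) ^+ 3 * K ^+ 3 / (1 - (q ^+ 2) ^+ 3 * K ^+ 3) ^+ 2 * Wr q N K.
Definition dl (F : fieldType) (q K : F) : F :=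
  (q ^+ 2) ^+ 3 * K ^+ 3 / (1 - (q ^+ 2) ^+ 3 * K ^+ 3) ^+ 2 - q * K / (1 - q * K) ^+ 2.
Definition ep (F : fieldType) (q N : F) : F :=
  (q ^+ 2) ^+ 3 * N ^+ 3 / (1 - (q ^+ 2) ^+ 3 * N ^+ 3) ^+ 2
  - q ^+ 3 * N ^+ 3 / (1 - q ^+ 3 * N ^+ 3) ^+ 2.


Section Nz.
Variable R : realType.
Variable q : R[i].
Hypothesis hq0 : 0 < `|q|.
Hypothesis hq1 : `|q| < 1.

Lemma qX_inj (a b : nat) : q ^+ a = q ^+ b -> a = b.
Proof.
move=> /(congr1 Num.norm); rewrite !normrX => h.
apply: (ieexprIn hq0 _ h); by rewrite lt_eqF.
Qed.
Lemma qnz : q != 0. Proof. by rewrite -normr_gt0. Qed.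
Lemma qXnz a : q ^+ a != 0. Proof. by rewrite expf_neq0 // qnz. Qed.
Lemma nz2 a b : a != b -> q ^+ a - q ^+ b != 0.
Proof. move=> hab; rewrite subr_eq0; apply/eqP=> /qX_inj /eqP; by rewrite (negbTE hab). Qed.
Lemma nz1 a : (0 < a)%N -> 1 - q ^+ a != 0.
Proof. move=> ha; rewrite -(expr0 q) nz2 //; by rewrite eq_sym -lt0n. Qed.
Lemma nz3 a : (0 < a)%N -> q ^+ a - 1 != 0.
Proof. move=> ha; rewrite -(expr0 q) nz2 //; by rewrite -lt0n. Qed.
Lemma nz1q : 1 - q != 0. Proof. by rewrite -(expr1 q) nz1. Qed.
End Nz.

Ltac qnorm := rewrite ?exprMn -?exprM; repeat (rewrite -exprD || rewrite -exprS || rewrite -exprSr).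
Ltac nzsolve hq0 hq1 := first [ exact: (qnz hq0) | exact: (qXnz hq0) | exact: (nz1q hq0 hq1)
   | apply: (nz1 hq0 hq1); lia | apply: (nz2 hq0 hq1); lia | apply: (nz3 hq0 hq1); lia ].
Ltac sidec hq0 hq1 := qnorm; repeat (apply/andP; split); nzsolve hq0 hq1.

Lemma O0 (R : realType) (q : R[i]) (n k : nat) : 0 < `|q| -> `|q| < 1 ->
  (k <= n)%N ->
  rho1 q (q ^+ (2 * n)) (q ^+ (2 * k)) - 1
  = W0 q (q ^+ (2 * n)) (q ^+ (2 * k)) - R0 q (q ^+ (2 * n)) (q ^+ (2 * k)).
Proof.
move=> hq0 hq1 hk.
rewrite /rho1 /W0 /R0 /Rw /Wr /phif /c1f.
field.
sidec hq0 hq1.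
Qed.

Lemma qS2 (R : realType) (q : R[i]) m : q ^+ (2 * m.+1) = q ^+ 2 * q ^+ (2 * m).
Proof. by rewrite -exprD; congr (_ ^+ _); lia. Qed.

Lemma O1 (R : realType) (q : R[i]) (n k : nat) : 0 < `|q| -> `|q| < 1 ->
  (k <= n)%N ->
  - ep q (q ^+ (2 * n)) * rho1 q (q ^+ (2 * n)) (q ^+ (2 * k))
  = W0 q (q ^+ (2 * n)) (q ^+ (2 * k)) * dl q (q ^+ (2 * k))
    + W1 q (q ^+ (2 * n)) (q ^+ (2 * k)) - R1 q (q ^+ (2 * n)) (q ^+ (2 * k)).
Proof.
move=> hq0 hq1 hk.
rewrite /rho1 /W0 /W1 /R1 /Rw /Wr /phif /phid /c1f /dl /ep.
field.
sidec hq0 hq1.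
Qed.

Lemma T0 (R : realType) (q : R[i]) (n k : nat) : 0 < `|q| -> `|q| < 1 ->
  (k < n)%N ->
  R0 q (q ^+ (2 * n)) (q ^+ (2 * k.+1)) * rho2 q (q ^+ (2 * n)) (q ^+ (2 * k))
  = W0 q (q ^+ (2 * n)) (q ^+ (2 * k)).
Proof.
move=> hq0 hq1 hk; rewrite qS2.
rewrite /rho2 /W0 /R0 /Rw /Wr /phif.
field.
sidec hq0 hq1.
Qed.

Lemma T1 (R : realType) (q : R[i]) (n k : nat) : 0 < `|q| -> `|q| < 1 ->
  (k < n)%N ->
  R1 q (q ^+ (2 * n)) (q ^+ (2 * k.+1)) * rho2 q (q ^+ (2 * n)) (q ^+ (2 * k))
  = W1 q (q ^+ (2 * n)) (q ^+ (2 * k)).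
Proof.
move=> hq0 hq1 hk; rewrite qS2.
rewrite /rho2 /W1 /R1 /Rw /Wr /phif /phid.
field.
sidec hq0 hq1.
Qed.

Lemma B0 (R : realType) (q : R[i]) (n : nat) : 0 < `|q| -> `|q| < 1 ->
  rho1 q (q ^+ (2 * n)) (q ^+ (2 * n)) * rho2 q (q ^+ (2 * n.+1)) (q ^+ (2 * n))
  = - W0 q (q ^+ (2 * n)) (q ^+ (2 * n)).
Proof.
move=> hq0 hq1; rewrite qS2.
rewrite /rho1 /rho2 /W0 /Wr /phif /c1f.
field.
sidec hq0 hq1.
Qed.

Lemma B1 (R : realType) (q : R[i]) (n : nat) : 0 < `|q| -> `|q| < 1 ->
  W0 q (q ^+ (2 * n)) (q ^+ (2 * n)) * ep q (q ^+ (2 * n))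
  + W1 q (q ^+ (2 * n)) (q ^+ (2 * n)) = 0.
Proof.
move=> hq0 hq1.
rewrite /W0 /W1 /Wr /phif /phid /ep.
field.
sidec hq0 hq1.
Qed.



Definition Aterm (R : realType) (q : R[i]) (n k : nat) : R[i] :=
  q ^+ (2 * k) * qint q (8 * k + 1)
     * (qpoch q (q ^+ 2) k ^+ 2 * qpoch q (q ^+ 2) (2 * k)
        / (qpoch (q ^+ 2) (q ^+ 2) (2 * k) * qpoch (q ^+ 6) (q ^+ 6) k ^+ 2))
     * (qpoch (q ^+ (3 + 6 * n)) (q ^+ 6) k * qpoch (q ^- (6 * n)) (q ^+ 6) k
        / (qpoch (q ^+ (3 + 6 * n)) (q ^+ 2) k * qpoch (q ^- (6 * n)) (q ^+ 2) k)).

Ltac pw := rewrite ?exprMn -?exprM; repeat (rewrite -exprD || rewrite -exprS || rewrite -exprSr);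
  congr (_ ^+ _); lia.
Ltac nzs hq0 hq1 := first [ assumption | exact: (qnz hq0) | exact: (qXnz hq0) | exact: (nz1q hq0 hq1)
   | apply: (nz1 hq0 hq1); lia | apply: (nz2 hq0 hq1); lia | apply: (nz3 hq0 hq1); lia ].
Ltac sidec2 hq0 hq1 := qnorm; repeat (apply/andP; split); nzs hq0 hq1.

Lemma qpoch_shiftV (F : fieldType) (x y : F) k : 1 - x != 0 -> 1 - x * y ^+ k != 0 ->
  qpoch x y k = qpoch (x * y) y k * (1 - x) / (1 - x * y ^+ k).
Proof. by move=> h1 h2; rewrite qpoch_shift //; field; rewrite h1 h2. Qed.
Lemma qpoch_shift3 (F : fieldType) (x y : F) k : 1 - x != 0 -> 1 - x * y != 0 -> 1 - x * y ^+ 2 != 0 ->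
  qpoch (x * y ^+ 3) y k = qpoch x y k * ((1 - x * y ^+ k) * (1 - x * y * y ^+ k) * (1 - x * y ^+ 2 * y ^+ k))
    / ((1 - x) * (1 - x * y) * (1 - x * y ^+ 2)).
Proof.
move=> h1 h2 h3.
have -> : x * y ^+ 3 = x * y ^+ 2 * y by rewrite -mulrA -exprSr.
rewrite qpoch_shift //.
have -> : x * y ^+ 2 = x * y * y by rewrite -mulrA -expr2.
rewrite qpoch_shift // qpoch_shift //.
rewrite -!mulrA -!expr2; field; rewrite ?h1 ?h2 ?h3 //.
Qed.
Definition Cn (R : realType) (q : R[i]) (n : nat) : R[i] :=
  qpoch (q ^+ 3) (q ^+ 2) (3 * n) * qpoch (q ^+ 3) (q ^+ 6) n
      / (qpoch (q ^+ 2) (q ^+ 2) (3 * n) * qpoch (q ^+ 6) (q ^+ 6) n).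

Section Conc.
Variable R : realType.
Variable q : R[i].
Hypothesis hq0 : 0 < `|q|.
Hypothesis hq1 : `|q| < 1.

Lemma nzinv a b : a != b -> 1 - (q ^+ a)^-1 * q ^+ b != 0.
Proof.
move=> hab; have ha := qXnz hq0 a.
have -> : 1 - (q ^+ a)^-1 * q ^+ b = (q ^+ a - q ^+ b) / q ^+ a by field.
by rewrite mulf_neq0 ?invr_eq0 // nz2.
Qed.

Lemma nzP22 k : qpoch (q ^+ 2) (q ^+ 2) k != 0.
Proof. apply: qpoch_nz => i _; rewrite -exprM -exprD; apply: (nz1 hq0 hq1); lia. Qed.
Lemma nzP66 k : qpoch (q ^+ 6) (q ^+ 6) k != 0.
Proof. apply: qpoch_nz => i _; rewrite -exprM -exprD; apply: (nz1 hq0 hq1); lia. Qed.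
Lemma nzPx2 n k : qpoch (q ^+ (3 + 6 * n)) (q ^+ 2) k != 0.
Proof. apply: qpoch_nz => i _; rewrite -exprM -exprD; apply: (nz1 hq0 hq1); lia. Qed.
Lemma nzPy2 n k : (k <= 3 * n)%N -> qpoch (q ^- (6 * n)) (q ^+ 2) k != 0.
Proof. move=> hk; apply: qpoch_nz => i hi; rewrite -exprM; apply: nzinv; lia. Qed.

Lemma stepk n k : (k < n)%N ->
  Aterm q n k.+1 = Aterm q n k * rho2 q (q ^+ (2 * n)) (q ^+ (2 * k)).
Proof.
move=> hk.
have h3 := nzP22 (2 * k); have h4 := nzP66 k; have h7 := nzPx2 n k.
have h8 : qpoch (q ^- (6 * n)) (q ^+ 2) k != 0 by apply: nzPy2; lia.
rewrite /Aterm.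
have -> : (2 * k.+1 = (2 * k).+2)%N by lia.
have -> : (8 * k.+1 + 1 = (8 * k + 1) + 8)%N by lia.
rewrite !qpochS !qintE ?(nz1q hq0 hq1) //.
have -> : q ^+ (2 * k).+2 = q ^+ 2 * q ^+ (2 * k) by pw.
have -> : q ^+ (8 * k + 1 + 8) = q * (q ^+ 2) ^+ 4 * (q ^+ (2 * k)) ^+ 4 by pw.
have -> : q ^+ (8 * k + 1) = q * (q ^+ (2 * k)) ^+ 4 by pw.
have -> : (q ^+ 2) ^+ k = q ^+ (2 * k) by pw.
have -> : (q ^+ 2) ^+ (2 * k) = (q ^+ (2 * k)) ^+ 2 by pw.
have -> : (q ^+ 2) ^+ (2 * k).+1 = q ^+ 2 * (q ^+ (2 * k)) ^+ 2 by pw.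
have -> : (q ^+ 6) ^+ k = (q ^+ (2 * k)) ^+ 3 by pw.
have e8 : q ^+ (3 + 6 * n) = q ^+ 3 * (q ^+ (2 * n)) ^+ 3 by pw.
have e9 : q ^- (6 * n) = ((q ^+ (2 * n)) ^+ 3)^-1 by rewrite -exprM; congr (_ ^-1); pw.
rewrite e8 e9 in h7 h8 *.
set K := q ^+ (2 * k); set N := q ^+ (2 * n).
set P1 := qpoch q (q ^+ 2) k.
set P2 := qpoch q (q ^+ 2) (2 * k).
set P3 := qpoch (q ^+ 2) (q ^+ 2) (2 * k).
set P4 := qpoch (q ^+ 6) (q ^+ 6) k.
set P5 := qpoch (q ^+ 3 * N ^+ 3) (q ^+ 6) k.
set P6 := qpoch (N ^+ 3)^-1 (q ^+ 6) k.
set P7 := qpoch (q ^+ 3 * N ^+ 3) (q ^+ 2) k.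
set P8 := qpoch (N ^+ 3)^-1 (q ^+ 2) k.
rewrite /rho2.
field.
rewrite /K /N; sidec2 hq0 hq1.
Qed.

Lemma nzP32 k : qpoch (q ^+ 3) (q ^+ 2) k != 0.
Proof. apply: qpoch_nz => i _; rewrite -exprM -exprD; apply: (nz1 hq0 hq1); lia. Qed.
Lemma nzP36 k : qpoch (q ^+ 3) (q ^+ 6) k != 0.
Proof. apply: qpoch_nz => i _; rewrite -exprM -exprD; apply: (nz1 hq0 hq1); lia. Qed.
Lemma nzCn n : Cn q n != 0.
Proof. rewrite /Cn mulf_neq0 ?invr_eq0 ?mulf_neq0 //; by [apply: nzP32|apply: nzP36|apply: nzP22|apply: nzP66]. Qed.

End Conc.



Ltac clean := repeat match goal with
  | H : is_true (_ != _) |- _ => clear H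
  | H : is_true (_ < Num.norm _) |- _ => clear H
  | H : is_true (Num.norm _ < _) |- _ => clear H
  | H : @eq ?T _ _ |- _ => lazymatch T with nat => fail | bool => fail | _ => clear H end
  end.
Ltac nlia := clean; lia.
Ltac pw2 := rewrite ?exprMn -?exprM; repeat (rewrite -exprD || rewrite -exprS || rewrite -exprSr);
  congr (_ ^+ _); nlia.
Ltac nzs2 hq0 hq1 := first [ assumption | exact: (qnz hq0) | exact: (qXnz hq0) | exact: (nz1q hq0 hq1)
   | apply: (nz1 hq0 hq1); nlia | apply: (nz2 hq0 hq1); nlia | apply: (nz3 hq0 hq1); nlia ].
Ltac sidec3 hq0 hq1 := qnorm; repeat (apply/andP; split); nzs2 hq0 hq1.

Section Conc.
Variable R : realType.
Variable q : R[i].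
Hypothesis hq0 : 0 < `|q|.
Hypothesis hq1 : `|q| < 1.

Lemma nzinv0 a : (0 < a)%N -> 1 - (q ^+ a)^-1 != 0.
Proof. move=> ha; rewrite -[X in 1 - X]mulr1 -(expr0 q) (nzinv hq0 hq1) //; by rewrite -lt0n. Qed.
Lemma qpoch_shift3V (F : fieldType) (x y : F) k : 1 - x != 0 -> 1 - x * y != 0 -> 1 - x * y ^+ 2 != 0 ->
  1 - x * y ^+ k != 0 -> 1 - x * y * y ^+ k != 0 -> 1 - x * y ^+ 2 * y ^+ k != 0 ->
  qpoch x y k = qpoch (x * y ^+ 3) y k * ((1 - x) * (1 - x * y) * (1 - x * y ^+ 2))
   / ((1 - x * y ^+ k) * (1 - x * y * y ^+ k) * (1 - x * y ^+ 2 * y ^+ k)).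
Proof.
move=> h1 h2 h3 h4 h5 h6; rewrite qpoch_shift3 //; field.
by rewrite h1 h2 h3 h4 h5 h6.
Qed.

Lemma stepn n k : (k <= n)%N ->
  Aterm q n.+1 k / Cn q n.+1 = Aterm q n k / Cn q n * rho1 q (q ^+ (2 * n)) (q ^+ (2 * k)).
Proof.
move=> hk.
have h3 := nzP22 hq0 hq1 (2 * k); have h4 := nzP66 hq0 hq1 k; have h7 := nzPx2 hq0 hq1 n k.
have h8 : qpoch (q ^- (6 * n)) (q ^+ 2) k != 0 by apply: (nzPy2 hq0 hq1); nlia.
have c1 := nzP32 hq0 hq1 (3 * n); have c2 := nzP36 hq0 hq1 n; have c3 := nzP22 hq0 hq1 (3 * n); have c4 := nzP66 hq0 hq1 n.
have nzx : 1 - q ^+ (3 + 6 * n) != 0 by apply: (nz1 hq0 hq1); nlia.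
have ex6 : qpoch (q ^+ (3 + 6 * n.+1)) (q ^+ 6) k
   = qpoch (q ^+ (3 + 6 * n)) (q ^+ 6) k * (1 - q ^+ (3 + 6 * n) * (q ^+ 6) ^+ k) / (1 - q ^+ (3 + 6 * n)).
  have e : q ^+ (3 + 6 * n.+1) = q ^+ (3 + 6 * n) * q ^+ 6.
    rewrite -exprD; congr (_ ^+ _); nlia.
  rewrite e; apply: qpoch_shift; exact: nzx.
have ex2 : qpoch (q ^+ (3 + 6 * n.+1)) (q ^+ 2) k
   = qpoch (q ^+ (3 + 6 * n)) (q ^+ 2) k * ((1 - q ^+ (3 + 6 * n) * (q ^+ 2) ^+ k)
       * (1 - q ^+ (3 + 6 * n) * q ^+ 2 * (q ^+ 2) ^+ k) * (1 - q ^+ (3 + 6 * n) * (q ^+ 2) ^+ 2 * (q ^+ 2) ^+ k))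
    / ((1 - q ^+ (3 + 6 * n)) * (1 - q ^+ (3 + 6 * n) * q ^+ 2) * (1 - q ^+ (3 + 6 * n) * (q ^+ 2) ^+ 2)).
  have e : q ^+ (3 + 6 * n.+1) = q ^+ (3 + 6 * n) * (q ^+ 2) ^+ 3.
    rewrite -exprM -exprD; congr (_ ^+ _); nlia.
  rewrite e; apply: qpoch_shift3.
  - exact: nzx.
  - rewrite -exprD; apply: (nz1 hq0 hq1); nlia.
  - rewrite -exprM -exprD; apply: (nz1 hq0 hq1); nlia.
have eyy : q ^- (6 * n.+1) * q ^+ 6 = q ^- (6 * n).
  rewrite (_ : 6 * n.+1 = 6 * n + 6)%N; last by nlia.
  rewrite exprD; field; sidec3 hq0 hq1.
have eyy2 : q ^- (6 * n.+1) * (q ^+ 2) ^+ 3 = q ^- (6 * n) by rewrite -exprM.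
have ey6 : qpoch (q ^- (6 * n.+1)) (q ^+ 6) k
   = qpoch (q ^- (6 * n)) (q ^+ 6) k * (1 - q ^- (6 * n.+1)) / (1 - q ^- (6 * n.+1) * (q ^+ 6) ^+ k).
  rewrite (qpoch_shiftV (x := q ^- (6 * n.+1)) (y := q ^+ 6) (k := k)).
  - by rewrite eyy.
  - by apply: nzinv0.
  - rewrite -exprM; apply: (nzinv hq0 hq1); nlia.
have ey2 : qpoch (q ^- (6 * n.+1)) (q ^+ 2) k
   = qpoch (q ^- (6 * n)) (q ^+ 2) k * ((1 - q ^- (6 * n.+1)) * (1 - q ^- (6 * n.+1) * q ^+ 2) * (1 - q ^- (6 * n.+1) * (q ^+ 2) ^+ 2))
   / ((1 - q ^- (6 * n.+1) * (q ^+ 2) ^+ k) * (1 - q ^- (6 * n.+1) * q ^+ 2 * (q ^+ 2) ^+ k) * (1 - q ^- (6 * n.+1) * (q ^+ 2) ^+ 2 * (q ^+ 2) ^+ k)).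
  rewrite (qpoch_shift3V (x := q ^- (6 * n.+1)) (y := q ^+ 2) (k := k)).
  by rewrite eyy2.
  by apply: nzinv0.
  all: rewrite -?(mulrA (q ^- (6 * n.+1))) -?exprM -?exprD; try (apply: (nzinv hq0 hq1); nlia).
rewrite /Aterm /Cn ex6 ex2 ey6 ey2.
have -> : (3 * n.+1 = (3 * n).+3)%N by nlia.
rewrite !qpochS.
have -> : (q ^+ 6) ^+ k = (q ^+ (2 * k)) ^+ 3 by pw2.
have -> : (q ^+ 2) ^+ k = q ^+ (2 * k) by pw2.
have -> : (q ^+ 2) ^+ (3 * n) = (q ^+ (2 * n)) ^+ 3 by pw2.
have -> : (q ^+ 2) ^+ (3 * n).+1 = q ^+ 2 * (q ^+ (2 * n)) ^+ 3 by pw2.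
have -> : (q ^+ 2) ^+ (3 * n).+2 = q ^+ 4 * (q ^+ (2 * n)) ^+ 3 by pw2.
have -> : (q ^+ 6) ^+ n = (q ^+ (2 * n)) ^+ 3 by pw2.
have e8 : q ^+ (3 + 6 * n) = q ^+ 3 * (q ^+ (2 * n)) ^+ 3 by pw2.
have e9 : q ^- (6 * n) = ((q ^+ (2 * n)) ^+ 3)^-1 by rewrite -exprM; congr (_ ^-1); pw2.
have e10 : q ^- (6 * n.+1) = (q ^+ 6 * (q ^+ (2 * n)) ^+ 3)^-1 by congr (_ ^-1); pw2.
rewrite e8 e9 e10 in h7 h8 *.
set K := q ^+ (2 * k); set N := q ^+ (2 * n).
set P1 := qpoch q (q ^+ 2) k.
set P2 := qpoch q (q ^+ 2) (2 * k).
set P3 := qpoch (q ^+ 2) (q ^+ 2) (2 * k).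
set P4 := qpoch (q ^+ 6) (q ^+ 6) k.
set P5 := qpoch (q ^+ 3 * N ^+ 3) (q ^+ 6) k.
set P6 := qpoch (N ^+ 3)^-1 (q ^+ 6) k.
set P7 := qpoch (q ^+ 3 * N ^+ 3) (q ^+ 2) k.
set P8 := qpoch (N ^+ 3)^-1 (q ^+ 2) k.
set C1 := qpoch (q ^+ 3) (q ^+ 2) (3 * n).
set C2 := qpoch (q ^+ 3) (q ^+ 6) n.
set C3 := qpoch (q ^+ 2) (q ^+ 2) (3 * n).
set C4 := qpoch (q ^+ 6) (q ^+ 6) n.
set Q := qint q (8 * k + 1).
rewrite /rho1 /c1f.
field.
rewrite /K /N; sidec3 hq0 hq1.
Qed.
End Conc.



Definition Hs (R : realType) (q : R[i]) (k : nat) : R[i] :=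
  \sum_(1 <= i < k.+1)
         (q ^+ (2 * i - 1) / qint q (2 * i - 1) ^+ 2
          - q ^+ (6 * i) / qint q (6 * i) ^+ 2).
Definition Js (R : realType) (q : R[i]) (n : nat) : R[i] :=
  \sum_(1 <= j < (2 * n).+1)
        (-1) ^+ (j - 1) * (q ^+ (3 * j) / qint q (3 * j) ^+ 2).
Definition Dk (R : realType) (q : R[i]) k := - Hs q k / (1 - q) ^+ 2.
Definition En (R : realType) (q : R[i]) n := - Js q n / (1 - q) ^+ 2.
Definition ff (R : realType) (q : R[i]) n k := Aterm q n k / Cn q n.

Section Conc.
Variable R : realType.
Variable q : R[i].
Hypothesis hq0 : 0 < `|q|.
Hypothesis hq1 : `|q| < 1.

Lemma Dstep k : Dk q k.+1 = Dk q k + dl q (q ^+ (2 * k)).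
Proof.
rewrite /Dk /Hs big_nat_recr /=; last by nlia.
have -> : (2 * k.+1 - 1 = (2 * k).+1)%N by nlia.
rewrite !(qintE _ (nz1q hq0 hq1)).
have -> : q ^+ (2 * k).+1 = q * q ^+ (2 * k) by rewrite exprS.
have -> : q ^+ (6 * k.+1) = (q ^+ 2) ^+ 3 * (q ^+ (2 * k)) ^+ 3 by pw2.
set K := q ^+ (2 * k); set H := \sum_(1 <= i < k.+1) _.
rewrite /dl; field.
rewrite /K; sidec3 hq0 hq1.
Qed.

Lemma Estep n : En q n.+1 = En q n + ep q (q ^+ (2 * n)).
Proof.
rewrite /En /Js.
have -> : ((2 * n.+1).+1 = (2 * n).+3)%N by nlia.
rewrite big_nat_recr /=; last by nlia.
rewrite big_nat_recr /=; last by nlia.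
have -> : ((2 * n).+1 - 1 = 2 * n)%N by nlia.
have -> : ((2 * n).+2 - 1 = (2 * n).+1)%N by nlia.
rewrite (exprS (-1)) (exprM (-1)) (expr2 (-1)) mulrNN mulr1 expr1n !mulN1r !mul1r.
rewrite !(qintE _ (nz1q hq0 hq1)).
have -> : q ^+ (3 * (2 * n).+1) = q ^+ 3 * (q ^+ (2 * n)) ^+ 3 by pw2.
have -> : q ^+ (3 * (2 * n).+2) = (q ^+ 2) ^+ 3 * (q ^+ (2 * n)) ^+ 3 by pw2.
set N := q ^+ (2 * n); set H := \sum_(1 <= i < (2 * n).+1) _.
rewrite /ep; field.
rewrite /N; sidec3 hq0 hq1.
Qed.


Lemma fstepk n k : (k < n)%N -> ff q n k.+1 = ff q n k * rho2 q (q ^+ (2 * n)) (q ^+ (2 * k)).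
Proof. by move=> hk; rewrite /ff (stepk hq0 hq1 hk) mulrAC. Qed.
Lemma fstepn n k : (k <= n)%N -> ff q n.+1 k = ff q n k * rho1 q (q ^+ (2 * n)) (q ^+ (2 * k)).
Proof. by move=> hk; rewrite /ff (stepn hq0 hq1 hk). Qed.
Lemma fdiag n : ff q n.+1 n.+1 = - W0 q (q ^+ (2 * n)) (q ^+ (2 * n)) * ff q n n.
Proof.
rewrite (fstepk (ltnSn n)) (fstepn (leqnn n)) -mulrA (B0 n hq0 hq1).
by rewrite mulrC.
Qed.

Lemma R0one n : R0 q (q ^+ (2 * n)) (q ^+ (2 * 0)) = 0.
Proof. by rewrite muln0 expr0 /R0 /Rw expr1n subrr !(mulr0, mul0r). Qed.
Lemma R1one n : R1 q (q ^+ (2 * n)) (q ^+ (2 * 0)) = 0.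
Proof. by rewrite muln0 expr0 /R1 /Rw expr1n subrr !(mulr0, mul0r) subrr. Qed.

Lemma ff00 : ff q 0 0 = 1.
Proof.
rewrite /ff /Aterm /Cn !muln0 !addn0 /= !qpoch0 /qint big_ord1 !expr0.
by rewrite !(mulr1, mul1r, divr1, invr1, expr1n).
Qed.

Lemma mainI n : \sum_(0 <= k < n.+1) ff q n k = 1.
Proof.
elim: n => [|n IH]; first by rewrite big_nat1 ff00.
rewrite big_nat_recr //=.
set N := q ^+ (2 * n).
pose h j := if (j <= n)%N then R0 q N (q ^+ (2 * j)) * ff q n j else W0 q N N * ff q n n.
have E : forall k, (0 <= k < n.+1)%N -> ff q n.+1 k = ff q n k + (h k.+1 - h k).
  move=> k /andP[_ hk]; rewrite ltnS in hk.
  rewrite (fstepn hk) /h hk.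
  have -> : (if (k.+1 <= n)%N then R0 q N (q ^+ (2 * k.+1)) * ff q n k.+1 else W0 q N N * ff q n n)
     = W0 q N (q ^+ (2 * k)) * ff q n k.
    case: ifP => hk1.
    - have t := T0 hq0 hq1 hk1; rewrite -/N in t.
      by rewrite (fstepk hk1) mulrCA t mulrC.
    - have ekn : k = n by apply/eqP; rewrite eqn_leq hk leqNgt hk1.
      by rewrite ekn.
  have o := O0 hq0 hq1 hk; rewrite -/N in o.
  have -> : rho1 q N (q ^+ (2 * k)) = W0 q N (q ^+ (2 * k)) - R0 q N (q ^+ (2 * k)) + 1.
    by rewrite -o subrK.
  ring.
rewrite (eq_big_nat _ _ E) big_split /= IH telescope_sumr // /h ltnn ?leq0n /= muln0 expr0.
rewrite /N fdiag.
have -> : R0 q (q ^+ (2 * n)) 1 = 0 by rewrite -(expr0 q) -[in q ^+ 0](muln0 2) R0one.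
ring.
Qed.


Lemma mainII n : \sum_(0 <= k < n.+1) ff q n k * (Dk q k - En q n) = 0.
Proof.
elim: n => [|n IH].
  rewrite big_nat1 /Dk /En /Hs /Js !big_geq //.
  by rewrite oppr0 mul0r subrr mulr0.
rewrite big_nat_recr //=.
set N := q ^+ (2 * n).
pose h j := if (j <= n)%N then ff q n j * (R0 q N (q ^+ (2 * j)) * (Dk q j - En q n) + R1 q N (q ^+ (2 * j)))
            else ff q n n * (W0 q N N * (Dk q n.+1 - En q n) + W1 q N N).
have E : forall k, (0 <= k < n.+1)%N ->
   ff q n.+1 k * (Dk q k - En q n.+1) = ff q n k * (Dk q k - En q n) + (h k.+1 - h k).
  move=> k /andP[_ hk]; rewrite ltnS in hk.
  rewrite (fstepn hk) /h hk Estep -/N.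
  have -> : (if (k.+1 <= n)%N then ff q n k.+1 * (R0 q N (q ^+ (2 * k.+1)) * (Dk q k.+1 - En q n)
              + R1 q N (q ^+ (2 * k.+1)))
            else ff q n n * (W0 q N N * (Dk q n.+1 - En q n) + W1 q N N))
     = ff q n k * (W0 q N (q ^+ (2 * k)) * (Dk q k + dl q (q ^+ (2 * k)) - En q n) + W1 q N (q ^+ (2 * k))).
    case: ifP => hk1.
    - have t0 := T0 hq0 hq1 hk1; rewrite -/N in t0.
      have t1 := T1 hq0 hq1 hk1; rewrite -/N in t1.
      rewrite (fstepk hk1) Dstep -t0 -t1 -/N; ring.
    - have ekn : k = n by apply/eqP; rewrite eqn_leq hk leqNgt hk1.
      by rewrite ekn Dstep.
  have o := O0 hq0 hq1 hk; rewrite -/N in o.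
  have o1 := O1 hq0 hq1 hk; rewrite -/N in o1.
  have er : rho1 q N (q ^+ (2 * k)) = W0 q N (q ^+ (2 * k)) - R0 q N (q ^+ (2 * k)) + 1.
    by rewrite -o subrK.
  rewrite er in o1; rewrite er.
  apply/eqP; rewrite -subr_eq0; apply/eqP.
  set w0 := W0 q N (q ^+ (2 * k)) in o1 *.
  set w1 := W1 q N (q ^+ (2 * k)) in o1 *.
  set a0 := R0 q N (q ^+ (2 * k)) in o1 *.
  set a1 := R1 q N (q ^+ (2 * k)) in o1 *.
  set e := ep q N in o1 *.
  set d := dl q (q ^+ (2 * k)) in o1 *.
  set f := ff q n k.
  set D := Dk q k. set E := En q n.
  have Z : f * (- e * (w0 - a0 + 1) - (w0 * d + w1 - a1)) = 0 by rewrite o1 subrr mulr0.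
  apply: (eq_trans _ Z); ring.
rewrite (eq_big_nat _ _ E) big_split /= IH telescope_sumr // /h ltnn ?leq0n /= muln0 expr0.
rewrite -/N fdiag -/N Estep -/N.
have -> : R0 q N 1 = 0 by rewrite /N -(expr0 q) -[in q ^+ 0](muln0 2) R0one.
have -> : R1 q N 1 = 0 by rewrite /N -(expr0 q) -[in q ^+ 0](muln0 2) R1one.
have b1 := B1 n hq0 hq1; rewrite -/N in b1.
set w0 := W0 q N N in b1 *. set w1 := W1 q N N in b1 *.
set f := ff q n n. set e := ep q N in b1 *.
have Z : f * (w0 * e + w1) = 0 by rewrite b1 mulr0.
apply: (eq_trans _ Z); ring.
Qed.

End Conc.

Local Open Scope complex_scope.

Theorem mainTheorem11 (R : realType) (n : nat) (q : R[i]) :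
  (0 < n)%N -> 0 < `|q| -> `|q| < 1 ->
  \sum_(1 <= k < n.+1)
     q ^+ (2 * k) * qint q (8 * k + 1)
     * (qpoch q (q ^+ 2) k ^+ 2 * qpoch q (q ^+ 2) (2 * k)
        / (qpoch (q ^+ 2) (q ^+ 2) (2 * k) * qpoch (q ^+ 6) (q ^+ 6) k ^+ 2))
     * (qpoch (q ^+ (3 + 6 * n)) (q ^+ 6) k * qpoch (q ^- (6 * n)) (q ^+ 6) k
        / (qpoch (q ^+ (3 + 6 * n)) (q ^+ 2) k * qpoch (q ^- (6 * n)) (q ^+ 2) k))
     * \sum_(1 <= i < k.+1)
         (q ^+ (2 * i - 1) / qint q (2 * i - 1) ^+ 2
          - q ^+ (6 * i) / qint q (6 * i) ^+ 2)
  = qpoch (q ^+ 3) (q ^+ 2) (3 * n) * qpoch (q ^+ 3) (q ^+ 6) n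
      / (qpoch (q ^+ 2) (q ^+ 2) (3 * n) * qpoch (q ^+ 6) (q ^+ 6) n)
    * \sum_(1 <= j < (2 * n).+1)
        (-1) ^+ (j - 1) * (q ^+ (3 * j) / qint q (3 * j) ^+ 2).
Proof.
move=> _ hq0 hq1.
change (\sum_(1 <= k < n.+1) Aterm q n k * Hs q k = Cn q n * Js q n).
have I := mainI hq0 hq1 n; have II := mainII hq0 hq1 n.
have hC := nzCn hq0 hq1 n.
have SA : \sum_(0 <= k < n.+1) Aterm q n k = Cn q n.
  rewrite -[RHS]mul1r -I mulr_suml; apply: eq_bigr => k _.
  by rewrite /ff divfK.
have SB : \sum_(0 <= k < n.+1) Aterm q n k * (Hs q k - Js q n) = 0.
  have -> : \sum_(0 <= k < n.+1) Aterm q n k * (Hs q k - Js q n)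
     = (- (1 - q) ^+ 2 * Cn q n) * \sum_(0 <= k < n.+1) ff q n k * (Dk q k - En q n).
    rewrite mulr_sumr; apply: eq_bigr => k _; rewrite /ff /Dk /En.
    field. by rewrite hC (nz1q hq0 hq1).
  by rewrite II mulr0.
have e0 : \sum_(0 <= k < n.+1) Aterm q n k * Hs q k = \sum_(1 <= k < n.+1) Aterm q n k * Hs q k.
  have h0 : Hs q 0 = 0 by rewrite /Hs big_geq.
  by rewrite big_ltn // h0 mulr0 add0r.
rewrite -e0.
have -> : \sum_(0 <= k < n.+1) Aterm q n k * Hs q k
   = \sum_(0 <= k < n.+1) Aterm q n k * (Hs q k - Js q n) + (\sum_(0 <= k < n.+1) Aterm q n k) * Js q n.
  rewrite mulr_suml -big_split; apply: eq_bigr => k _ /=; ring.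
by rewrite SB SA add0r.
Qed.
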